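(* Let $\mathcal A$ be the set of admissible price systems and $I(p)=\int_X p^\sharp(x)\,d\mu(x)-\int_Y p^\flat(y)\,d\nu(y)$. Then $I$ is convex, and there exists $\bar p\in\mathcal A$ with $I(\bar p)=\inf_{p\in\mathcal A}I(p)$.
   Context: Standing setting. $X\subset\mathbb R^{d_1}$, $Y\subset\mathbb R^{d_2}$, $Z_0\subset\mathbb R^{d_3}$ compact; $\mu,\nu$ finite nonnegative Borel measures on $X,Y$. $u$ continuous on a neighbourhood of $X\times Z_0$, differentiable in $x$ with $D_xu$ continuous; $v$ continuous on a neighbourhood of $Y\times Z_0$, differentiable in $y$ with $D_yv$ continuous. $Z=Z_0\cup\{\varnothing_d\}\cup\{\varnothing_s\}$ with two distinct isolated extra points; $u(x,\varnothing_d)=0$, $u(x,\varnothing_s)=-1$, $v(y,\varnothing_s)=0$, $v(y,\varnothing_d)=1$. $b(z)=\max_x u(x,z)$, $a(z)=\min_y v(y,z)$, $Z_1=\{z\in Z:a(z)\le b(z)\}$, assumed non-empty. A price system is a continuous $p:Z\to\mathbb R$ with $p(\varnothing_d)=p(\varnothing_s)=0$; admissible if $a\le p\le b$ on $Z_1$. $p^\sharp(x)=\max_{z\in Z}\{u(x,z)-p(z)\}$, $p^\flat(y)=\min_{z\in Z}\{v(y,z)-p(z)\}$. *)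

(* Defs.v *)
From HB Require Import structures.
From mathcomp Require Import all_boot all_order all_algebra.
From mathcomp Require Import all_classical all_reals all_analysis.
Set Implicit Arguments.
Unset Strict Implicit.
Unset Printing Implicit Defensive.
Import Order.TTheory GRing.Theory Num.Theory.
Import numFieldNormedType.Exports.
Local Open Scope classical_set_scope.
Local Open Scope ring_scope.

(* R^n with its Borel sigma-algebra (generated by the open sets of the
   normed space 'rV[R]_n); convertible to 'rV[R]_n. *)
Definition borelRV (R : realType) (n : nat) :=
  g_sigma_algebraType (@open 'rV[R]_n).

(* Z = Z0 u {empty_d} u {empty_s}: a point of R^{d3} or one of two extra
   (isolated) points. *)
Inductive Zpt (V : Type) := ZR of V | Zd | Zs.
Arguments Zd {V}.
Arguments Zs {V}.

Section Defs.
Variables (R : realType) (d1 d2 d3 : nat).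
Local Notation V := 'rV[R]_d3.

Definition Zset (Z0 : set V) : set (Zpt V) :=
  [set z | match z with ZR z0 => Z0 z0 | _ => True end].

Definition uext (u : 'rV[R]_d1 -> V -> R) (x : 'rV[R]_d1) (z : Zpt V) : R :=
  match z with ZR z0 => u x z0 | Zd => 0 | Zs => -1 end.
Definition vext (v : 'rV[R]_d2 -> V -> R) (y : 'rV[R]_d2) (z : Zpt V) : R :=
  match z with ZR z0 => v y z0 | Zs => 0 | Zd => 1 end.

Definition bfun (X : set 'rV[R]_d1) (u : 'rV[R]_d1 -> V -> R) (z : Zpt V) : R :=
  sup [set uext u x z | x in X].
Definition afun (Y : set 'rV[R]_d2) (v : 'rV[R]_d2 -> V -> R) (z : Zpt V) : R :=
  inf [set vext v y z | y in Y].

Definition Z1set X Y Z0 u v : set (Zpt V) :=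
  [set z | Zset Z0 z /\ afun Y v z <= bfun X u z].

(* price system: continuous on Z (the two extra points being isolated, this
   is continuity of the restriction to Z0), vanishing at the extra points *)
Definition price_system (Z0 : set V) (p : Zpt V -> R) : Prop :=
  {within Z0, continuous (fun z0 => p (ZR z0))} /\ p Zd = 0 /\ p Zs = 0.

Definition admissible X Y Z0 u v (p : Zpt V -> R) : Prop :=
  price_system Z0 p /\
  forall z, Z1set X Y Z0 u v z -> afun Y v z <= p z <= bfun X u z.

Definition psharp Z0 u (p : Zpt V -> R) (x : 'rV[R]_d1) : R :=
  sup [set uext u x z - p z | z in Zset Z0].
Definition pflat Z0 v (p : Zpt V -> R) (y : 'rV[R]_d2) : R :=
  inf [set vext v y z - p z | z in Zset Z0].

Definition Ifun (mu : {finite_measure set (borelRV R d1) -> \bar R})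
  (nu : {finite_measure set (borelRV R d2) -> \bar R})
  (X : set 'rV[R]_d1) (Y : set 'rV[R]_d2) Z0 u v (p : Zpt V -> R) : R :=
  Rintegral mu (X : set (borelRV R d1)) (psharp Z0 u p : borelRV R d1 -> R)
  - Rintegral nu (Y : set (borelRV R d2)) (pflat Z0 v p : borelRV R d2 -> R).

End Defs.

(* f : R^{n} -> R^{m} -> R is continuous on a neighbourhood of A x B,
   differentiable in the first variable there, with continuous partial
   derivative D_1 f (expressed through all directional derivatives 'D_w). *)
Definition regular_first (R : realType) (n m : nat)
  (A : set 'rV[R]_n) (B : set 'rV[R]_m) (f : 'rV[R]_n -> 'rV[R]_m -> R) : Prop :=
  exists U : set ('rV[R]_n * 'rV[R]_m),
    [/\ open U, A `*` B `<=` U,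
        (forall q, U q -> {for q, continuous (fun r => f r.1 r.2)}),
        (forall q, U q -> differentiable (fun x => f x q.2) q.1) &
        (forall (w : 'rV[R]_n) q, U q ->
           {for q, continuous (fun r => 'D_w (fun x => f x r.2) r.1)})].

(* Main.v *)
Require Import Defs.
From HB Require Import structures.
From mathcomp Require Import all_boot all_order all_algebra.
From mathcomp Require Import all_classical all_reals all_analysis.
From mathcomp Require Import lra ring.
Import Order.TTheory GRing.Theory Num.Theory.
Import numFieldNormedType.Exports.
Local Open Scope classical_set_scope.
Local Open Scope ring_scope.

Set Implicit Arguments.
Unset Strict Implicit.
Unset Printing Implicit Defensive.
Lemma heine {R : realType} {T : pseudoMetricType R} {A : set T} {f : T -> R} :
  compact A -> (forall a, A a -> {for a, continuous f}) ->
  forall e, 0 < e -> exists2 d, 0 < d & forall a b, A a -> ball a d b -> `|f a - f b| < e.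
Proof.
move=> /compact_near_coveringP cA cf e e0.
have H : \forall d \near (0:R)^'+, A `<=` (fun x => forall b, ball x d b -> `|f x - f b| < e).
  apply: (cA R (0:R)^'+ (fun d x => forall b, ball x d b -> `|f x - f b| < e)) => x Ax.
  have := cf x Ax (ball (f x) (e/2)) (nbhsx_ballx _ _ _).
  rewrite divr_gt0 // => /(_ isT) /nbhs_ballP [eta /= eta0 Heta].
  exists (ball x (eta/2), [set d | 0 < d < eta/2]); first split.
  - by apply: nbhsx_ballx; rewrite divr_gt0.
  - exists (eta/2) => /=; first by rewrite divr_gt0.
    move=> d /= + d0; rewrite d0 /=.
    rewrite /ball /= sub0r normrN gtr0_norm //.
  move=> [x' d] [/= xx' /andP [d0 deta]] b x'b.
  have xb : ball x eta b.
    rewrite (splitr eta); apply: ball_triangle xx' _.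
    by apply: le_ball x'b; rewrite ltW.
  have le2 : eta/2 <= eta by lra.
  have h1 := Heta _ (le_ball le2 xx'). have h2 := Heta _ xb.
  move: h1 h2; rewrite /ball /=.
  move=> h1 h2.
  rewrite (_ : f x' - f b = (f x - f b) - (f x - f x')); last by ring.
  apply: (le_lt_trans (ler_normB _ _)). rewrite [e]splitr ltrD //.
have: \forall d \near (0:R)^'+, 0 < d /\ A `<=` (fun x => forall b, ball x d b -> `|f x - f b| < e).
  by apply: filterI => //; exact: nbhs_right_gt.
by move/filter_ex => [d [d0 hd]]; exists d => // a b Aa; apply: hd.
Qed.
Lemma uc_within {R : realType} {T : pseudoMetricType R} {A : set T} {f : T -> R} :
  (forall e, 0 < e -> exists2 d, 0 < d & forall a b, A a -> A b -> ball a d b -> `|f a - f b| < e) ->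
  {within A, continuous f}.
Proof.
move=> H x; apply/cvg_ballP => e e0.
have [d d0 Hd] := H e e0.
rewrite /from_subspace /=. 
apply/nbhs_ballP; exists d => //= y.
rewrite ball_subspace_ball /subspace_ball; case: ifP => /asboolP Ax.
  by move=> [Ay xy]; apply: Hd.
by move=> ->; apply: ballxx.
Qed.
Lemma within_bnd {R : realType} {T : topologicalType} {A : set T} {f : T -> R} :
  compact A -> {within A, continuous f} -> exists M, forall a, A a -> `|f a| <= M.
Proof.
move=> cA cf.
have /compact_bounded [M [_ HM]] := continuous_compact cf cA.
exists (M + 1) => a Aa; apply: HM; last by exists a.
by rewrite ltrDl.
Qed.
Section SupImg.
Context {R : realType} {I : Type}.
Implicit Types (S : set I) (g : I -> R).

Lemma sup_img_ge S g c i : S i -> (forall j, S j -> g j <= c) ->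
  g i <= sup [set g j | j in S].
Proof.
move=> Si Hc; apply: ub_le_sup; last by exists i.
by exists c => _ [j Sj <-]; apply: Hc.
Qed.

Lemma sup_img_le S g c : S !=set0 -> (forall j, S j -> g j <= c) ->
  sup [set g j | j in S] <= c.
Proof.
move=> [i Si] Hc; apply: ge_sup; first by exists (g i), i.
by move=> _ [j Sj <-]; apply: Hc.
Qed.

Lemma inf_img_le S g c i : S i -> (forall j, S j -> c <= g j) ->
  inf [set g j | j in S] <= g i.
Proof.
move=> Si Hc; apply: ge_inf; last by exists i.
by exists c => _ [j Sj <-]; apply: Hc.
Qed.

Lemma inf_img_ge S g c : S !=set0 -> (forall j, S j -> c <= g j) ->
  c <= inf [set g j | j in S].
Proof.
move=> [i Si] Hc; apply: lb_le_inf; first by exists (g i), i.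
by move=> _ [j Sj <-]; apply: Hc.
Qed.
End SupImg.
Lemma meas_uc {R : realType} {n : nat} (A : set 'rV[R]_n) (f : 'rV[R]_n -> R) :
  closed A ->
  (forall e, 0 < e -> exists2 d, 0 < d & forall a b, A a -> A b -> ball a d b -> `|f a - f b| < e) ->
  measurable_fun (A : set (borelRV R n)) (f : borelRV R n -> R).
Proof.
move=> clA H; apply: (@measurability _ _ (borelRV R n) _ A f _ (measurable_realfun.RGenOpens.measurableE R)).
move=> _ [B [x [y ->]] <-].
have oO : open `]x, y[%classic by exact: interval_open.
set O := `]x, y[%classic in oO *.
pose W := [set w : 'rV[R]_n | exists a, A a /\ exists2 d, 0 < d &
   (ball a d w /\ forall w', A w' -> ball a d w' -> O (f w'))].
have -> : A `&` f @^-1` O = A `&` W.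
  apply/seteqP; split => w [Aw Ow]; split => //.
    have := oO _ Ow; rewrite /= => /nbhs_ballP [r /= r0 Hr].
    have [d d0 Hd] := H r r0.
    exists w; split => //; exists d => //; split; first exact: ballxx.
    move=> w' Aw' ww'; apply: Hr; rewrite /ball /=.
    exact: Hd.
  by case: Ow => a [Aa [d d0 [aw Hd]]]; apply: Hd.
apply: measurableI.
  rewrite -(setCK A); apply: measurableC; apply: sub_sigma_algebra.
  exact: closed_openC.
apply: sub_sigma_algebra; rewrite openE => w [a [Aa [d d0 [aw Hd]]]].
have : open (ball a d) by exact: ball_open.
move=> /(_ w aw); apply: filterS => w' aw'.
by exists a; split => //; exists d.
Qed.
Lemma meas_compact {R : realType} {n : nat} (A : set 'rV[R]_n) :
  compact A -> measurable (A : set (borelRV R n)).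
Proof.
move=> cA; have clA : closed A by apply: compact_closed => //; exact: norm_hausdorff.
rewrite -(setCK A); apply: measurableC; apply: sub_sigma_algebra.
exact: closed_openC.
Qed.
Lemma int_uc {R : realType} {n : nat} (mu : {finite_measure set (borelRV R n) -> \bar R})
  (A : set 'rV[R]_n) (f : 'rV[R]_n -> R) (M : R) :
  compact A ->
  (forall e, 0 < e -> exists2 d, 0 < d & forall a b, A a -> A b -> ball a d b -> `|f a - f b| < e) ->
  (forall a, A a -> `|f a| <= M) ->
  mu.-integrable (A : set (borelRV R n)) (EFin \o (f : borelRV R n -> R)).
Proof.
move=> cA H HM.
have clA : closed A by apply: compact_closed => //; exact: norm_hausdorff.
have mA : measurable (A : set (borelRV R n)).
  rewrite -(setCK A); apply: measurableC; apply: sub_sigma_algebra.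
  exact: closed_openC.
apply: measurable_bounded_integrable => //.
- by have := fin_num_measure mu _ mA; move=> /fin_numPlt /andP [_ ->].
- exact: meas_uc.
- exists M; split; first by rewrite num_real.
  by move=> K MK x Ax; apply: (le_trans (HM x Ax)); rewrite ltW.
Qed.
Section IntHelp.
Context {d : measure_display} {T : measurableType d} {R : realType} (mu : measure T R) (D : set T).
Hypothesis mD : measurable D.

Lemma intRZ (f : T -> R) k : mu.-integrable D (EFin \o f) ->
  mu.-integrable D (EFin \o (fun x => k * f x)).
Proof.
move=> i; rewrite (_ : _ \o _ = (fun x => k%:E * (EFin \o f) x)%E).
  exact: integrableZl.
by apply/funext => x /=; rewrite EFinM.
Qed.

Lemma intRD (f g : T -> R) : mu.-integrable D (EFin \o f) -> mu.-integrable D (EFin \o g) ->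
  mu.-integrable D (EFin \o (fun x => f x + g x)).
Proof.
move=> i j; rewrite (_ : _ \o _ = (EFin \o f) \+ (EFin \o g))%E.
  exact: integrableD.
by apply/funext => x /=; rewrite EFinD.
Qed.
End IntHelp.

Lemma within_comb {R : realType} {T : topologicalType} (A : set T) (f g : T -> R) (a b : R) :
  {within A, continuous f} -> {within A, continuous g} ->
  {within A, continuous (fun x => a * f x + b * g x)}.
Proof.
move=> cf cg x.
apply: cvgD; apply: cvgM => //; [exact: cvg_cst | exact: cf | exact: cvg_cst | exact: cg].
Qed.
Lemma max_facts {R : realType} (x a : R) :
  [/\ x <= Num.max x a, a <= Num.max x a & (Num.max x a = x \/ Num.max x a = a)].
Proof.
rewrite le_max lexx le_max lexx orbT; split => //.
by case: (leP x a) => h; [right | left].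
Qed.

Lemma min_facts {R : realType} (x a : R) :
  [/\ Num.min x a <= x, Num.min x a <= a & (Num.min x a = x \/ Num.min x a = a)].
Proof.
rewrite ge_min lexx ge_min lexx orbT; split => //.
by case: (leP x a) => h; [left | right].
Qed.

Lemma clamp_lip {R : realType} (x a b x' a' b' : R) :
  `|Num.min (Num.max x a) b - Num.min (Num.max x' a') b'| <= `|x - x'| + `|a - a'| + `|b - b'|.
Proof.
have n1 := ler_norm (x - x'); have n2 := ler_norm (a - a'); have n3 := ler_norm (b - b').
have m1 := ler_norm (x' - x); have m2 := ler_norm (a' - a); have m3 := ler_norm (b' - b).
rewrite distrC in m1; rewrite distrC in m2; rewrite distrC in m3.
have [h1 h2 h3] := max_facts x a; have [h4 h5 h6] := max_facts x' a'.
have [k1 k2 k3] := min_facts (Num.max x a) b; have [k4 k5 k6] := min_facts (Num.max x' a') b'.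
move: h1 h2 h3 h4 h5 h6 k1 k2 k3 k4 k5 k6.
set M1 := Num.max x a; set M2 := Num.max x' a'; set N1 := Num.min M1 b; set N2 := Num.min M2 b'.
move=> h1 h2 h3 h4 h5 h6 k1 k2 k3 k4 k5 k6.
rewrite ler_norml; apply/andP; split;
case: h3 => e1; case: h6 => e2; case: k3 => e3; case: k6 => e4; lra.
Qed.
Section Main.
Context (R : realType) (d1 d2 d3 : nat)
  (X : set 'rV[R]_d1) (Y : set 'rV[R]_d2) (Z0 : set 'rV[R]_d3)
  (u : 'rV[R]_d1 -> 'rV[R]_d3 -> R) (v : 'rV[R]_d2 -> 'rV[R]_d3 -> R).
Hypothesis cX : compact X.
Hypothesis cY : compact Y.
Hypothesis cZ : compact Z0.
Hypothesis nX : X !=set0.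
Hypothesis nY : Y !=set0.
Hypothesis cu : forall q, (X `*` Z0) q -> {for q, continuous (fun r => u r.1 r.2)}.
Hypothesis cv : forall q, (Y `*` Z0) q -> {for q, continuous (fun r => v r.1 r.2)}.

Lemma bnd_u : exists M, forall x z, X x -> Z0 z -> `|u x z| <= M.
Proof.
have [M HM] := within_bnd (compact_setX cX cZ)
  (continuous_in_subspaceT (fun q qin => cu (set_mem qin))).
by exists M => x z Xx Zz; apply: (HM (x, z)).
Qed.

Lemma bnd_v : exists M, forall y z, Y y -> Z0 z -> `|v y z| <= M.
Proof.
have [M HM] := within_bnd (compact_setX cY cZ)
  (continuous_in_subspaceT (fun q qin => cv (set_mem qin))).
by exists M => x z Xx Zz; apply: (HM (x, z)).
Qed.

Lemma uc_u e : 0 < e -> exists2 d, 0 < d &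
  forall x x' z z', X x -> Z0 z -> ball x d x' -> ball z d z' -> `|u x z - u x' z'| < e.
Proof.
move=> e0; have [d d0 Hd] := heine (compact_setX cX cZ) cu e0.
exists d => // x x' z z' Xx Zz xx' zz'.
exact: (Hd (x, z) (x', z')).
Qed.

Lemma uc_v e : 0 < e -> exists2 d, 0 < d &
  forall y y' z z', Y y -> Z0 z -> ball y d y' -> ball z d z' -> `|v y z - v y' z'| < e.
Proof.
move=> e0; have [d d0 Hd] := heine (compact_setX cY cZ) cv e0.
exists d => // x x' z z' Xx Zz xx' zz'.
exact: (Hd (x, z) (x', z')).
Qed.
Variables (Mu Mv : R).
Hypothesis HMu : forall x z, X x -> Z0 z -> `|u x z| <= Mu.
Hypothesis HMv : forall y z, Y y -> Z0 z -> `|v y z| <= Mv.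

Local Notation V := 'rV[R]_d3.
Local Notation ZZ := (Zset Z0).
Let Bu := `|Mu| + 1.
Let Bv := `|Mv| + 1.

Definition pbnd (p : Zpt V -> R) P := forall z, ZZ z -> `|p z| <= P.

Lemma ZZd : ZZ Zd. Proof. by []. Qed.
Lemma ZZs : ZZ Zs. Proof. by []. Qed.
Lemma ZZne : ZZ !=set0. Proof. by exists Zd. Qed.

Lemma uext_bnd x z : X x -> ZZ z -> `|uext u x z| <= Bu.
Proof.
rewrite /Bu; case: z => [z0||] /= Xx Zz.
- have h1 := HMu Xx Zz. have h2 := ler_norm Mu. lra.
- by rewrite normr0 addr_ge0.
- by rewrite normrN normr1 lerDr.
Qed.

Lemma vext_bnd y z : Y y -> ZZ z -> `|vext v y z| <= Bv.
Proof.
rewrite /Bv; case: z => [z0||] /= Yy Zz.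
- have h1 := HMv Yy Zz. have h2 := ler_norm Mv. lra.
- by rewrite normr1 lerDr.
- by rewrite normr0 addr_ge0.
Qed.

Lemma pbnd_ge0 p P : pbnd p P -> 0 <= P.
Proof. by move=> /(_ Zd ZZd); apply: le_trans. Qed.

Lemma ps_ub p P x z : X x -> pbnd p P -> ZZ z ->
  uext u x z - p z <= psharp Z0 u p x.
Proof.
move=> Xx Hp Zz; apply: (sup_img_ge (g := fun z => uext u x z - p z) (c := Bu + P)) => // j Zj.
apply: (le_trans (ler_norm _)); apply: (le_trans (ler_normB _ _)).
by rewrite lerD ?uext_bnd ?Hp.
Qed.

Lemma ps_le p x c : (forall z, ZZ z -> uext u x z - p z <= c) ->
  psharp Z0 u p x <= c.
Proof. by move=> H; apply: (sup_img_le (g := fun z => uext u x z - p z)) => //; exact: ZZne. Qed.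

Lemma ps_bnd p P x : X x -> pbnd p P -> `|psharp Z0 u p x| <= Bu + P.
Proof.
move=> Xx Hp; rewrite ler_norml; apply/andP; split.
  apply: (le_trans _ (ps_ub Xx Hp ZZd)).
  rewrite lerNl opprB; apply: (le_trans (ler_norm _)); apply: (le_trans (ler_normB _ _)).
  by rewrite addrC lerD ?uext_bnd ?Hp.
apply: ps_le => z Zz; apply: (le_trans (ler_norm _)); apply: (le_trans (ler_normB _ _)).
by rewrite lerD ?uext_bnd ?Hp.
Qed.

Lemma pf_lb p P y z : Y y -> pbnd p P -> ZZ z ->
  pflat Z0 v p y <= vext v y z - p z.
Proof.
move=> Yy Hp Zz; apply: (inf_img_le (g := fun z => vext v y z - p z) (c := - (Bv + P))) => // j Zj.
rewrite lerNl; apply: (le_trans (ler_norm _)); rewrite normrN.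
apply: (le_trans (ler_normB _ _)).
by rewrite lerD ?vext_bnd ?Hp.
Qed.

Lemma pf_ge p y c : (forall z, ZZ z -> c <= vext v y z - p z) ->
  c <= pflat Z0 v p y.
Proof. by move=> H; apply: (inf_img_ge (g := fun z => vext v y z - p z)) => //; exact: ZZne. Qed.

Lemma pf_bnd p P y : Y y -> pbnd p P -> `|pflat Z0 v p y| <= Bv + P.
Proof.
move=> Yy Hp; rewrite ler_norml; apply/andP; split.
  apply: pf_ge => z Zz; rewrite lerNl; apply: (le_trans (ler_norm _)); rewrite normrN.
  apply: (le_trans (ler_normB _ _)).
  by rewrite lerD ?vext_bnd ?Hp.
apply: (le_trans (pf_lb Yy Hp ZZd)).
apply: (le_trans (ler_norm _)); apply: (le_trans (ler_normB _ _)).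
by rewrite lerD ?vext_bnd ?Hp.
Qed.

Lemma price_pbnd p : price_system Z0 p -> exists P, pbnd p P.
Proof.
move=> [cp [pd ps]]; have [M HM] := within_bnd cZ cp.
exists `|M| => -[z0||] /= Zz.
- exact: (le_trans (HM _ Zz) (ler_norm _)).
- by rewrite pd normr0.
- by rewrite ps normr0.
Qed.

Lemma ps_ge0 p x : X x -> price_system Z0 p -> 0 <= psharp Z0 u p x.
Proof.
move=> Xx /[dup] pp [_ [pd _]]; have [P HP] := price_pbnd pp.
by have := ps_ub Xx HP ZZd; rewrite /= pd subr0.
Qed.

Lemma pf_le0 p y : Y y -> price_system Z0 p -> pflat Z0 v p y <= 0.
Proof.
move=> Yy /[dup] pp [_ [_ ps]]; have [P HP] := price_pbnd pp.
by have := pf_lb Yy HP ZZs; rewrite /= ps subr0.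
Qed.
Lemma ps_cmp p q P d x : X x -> pbnd p P -> (forall z, ZZ z -> p z - d <= q z) ->
  psharp Z0 u q x <= psharp Z0 u p x + d.
Proof.
move=> Xx Hp H; apply: ps_le => z Zz.
have h1 := ps_ub Xx Hp Zz; have h2 := H z Zz; lra.
Qed.

Lemma pf_cmp p q P d y : Y y -> pbnd p P -> (forall z, ZZ z -> q z <= p z + d) ->
  pflat Z0 v p y - d <= pflat Z0 v q y.
Proof.
move=> Yy Hp H; apply: pf_ge => z Zz.
have h1 := pf_lb Yy Hp Zz; have h2 := H z Zz; lra.
Qed.

Lemma ps_conv p q P Q t x : X x -> pbnd p P -> pbnd q Q -> 0 <= t <= 1 ->
  psharp Z0 u (fun z => t * p z + (1 - t) * q z) x <=
  t * psharp Z0 u p x + (1 - t) * psharp Z0 u q x.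
Proof.
move=> Xx Hp Hq /andP [t0 t1]; apply: ps_le => z Zz.
have h1 := ps_ub Xx Hp Zz; have h2 := ps_ub Xx Hq Zz; nra.
Qed.

Lemma pf_conv p q P Q t y : Y y -> pbnd p P -> pbnd q Q -> 0 <= t <= 1 ->
  t * pflat Z0 v p y + (1 - t) * pflat Z0 v q y <=
  pflat Z0 v (fun z => t * p z + (1 - t) * q z) y.
Proof.
move=> Yy Hp Hq /andP [t0 t1]; apply: pf_ge => z Zz.
have h1 := pf_lb Yy Hp Zz; have h2 := pf_lb Yy Hq Zz; nra.
Qed.

Lemma ps_uc p P : pbnd p P -> forall e, 0 < e -> exists2 d, 0 < d &
  forall x x', X x -> X x' -> ball x d x' ->
    `|psharp Z0 u p x - psharp Z0 u p x'| < e.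
Proof.
move=> Hp e e0; have [d d0 Hd] := uc_u (divr_gt0 e0 (ltr0Sn _ 1)).
exists d => // x x' Xx Xx' xx'.
have key : forall a b, X a -> X b -> ball a d b \/ ball b d a ->
    psharp Z0 u p a <= psharp Z0 u p b + e / 2.
  move=> a b Xa Xb ab; apply: ps_le => -[z0||] Zz /=.
  - have h1 := ps_ub Xb Hp Zz.
    have h2 : `|u a z0 - u b z0| < e / 2.
      case: ab => ab; first by apply: Hd => //; apply: ballxx.
      by rewrite distrC; apply: Hd => //; apply: ballxx.
    move: h1 h2 => /= h1 /ltr_normlP [h2 h3]; lra.
  - have h1 := ps_ub Xb Hp Zz; have h3 : 0 < e / 2 by lra. move: h1 => /= h1; lra.
  - have h1 := ps_ub Xb Hp Zz; have h3 : 0 < e / 2 by lra. move: h1 => /= h1; lra.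
have k1 := key _ _ Xx Xx' (or_introl xx'); have k2 := key _ _ Xx' Xx (or_intror xx').
rewrite ltr_norml; apply/andP; split; lra.
Qed.

Lemma pf_uc p P : pbnd p P -> forall e, 0 < e -> exists2 d, 0 < d &
  forall y y', Y y -> Y y' -> ball y d y' ->
    `|pflat Z0 v p y - pflat Z0 v p y'| < e.
Proof.
move=> Hp e e0; have [d d0 Hd] := uc_v (divr_gt0 e0 (ltr0Sn _ 1)).
exists d => // x x' Xx Xx' xx'.
have key : forall a b, Y a -> Y b -> ball a d b \/ ball b d a ->
    pflat Z0 v p b - e / 2 <= pflat Z0 v p a.
  move=> a b Xa Xb ab; apply: pf_ge => -[z0||] Zz /=.
  - have h1 := pf_lb Xb Hp Zz.
    have h2 : `|v a z0 - v b z0| < e / 2.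
      case: ab => ab; first by apply: Hd => //; apply: ballxx.
      by rewrite distrC; apply: Hd => //; apply: ballxx.
    move: h1 h2 => /= h1 /ltr_normlP [h2 h3]; lra.
  - have h1 := pf_lb Xb Hp Zz; have h3 : 0 < e / 2 by lra. move: h1 => /= h1; lra.
  - have h1 := pf_lb Xb Hp Zz; have h3 : 0 < e / 2 by lra. move: h1 => /= h1; lra.
have k1 := key _ _ Xx Xx' (or_introl xx'); have k2 := key _ _ Xx' Xx (or_intror xx').
rewrite ltr_norml; apply/andP; split; lra.
Qed.
Variables (mu : {finite_measure set (borelRV R d1) -> \bar R})
  (nu : {finite_measure set (borelRV R d2) -> \bar R}).

Let mX : measurable (X : set (borelRV R d1)) := meas_compact cX.
Let mY : measurable (Y : set (borelRV R d2)) := meas_compact cY.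

Lemma int_ps p P : pbnd p P ->
  mu.-integrable (X : set (borelRV R d1)) (EFin \o (psharp Z0 u p : borelRV R d1 -> R)).
Proof. by move=> Hp; apply: (int_uc mu cX (ps_uc Hp)) => a Xa; apply: ps_bnd Hp. Qed.

Lemma int_pf p P : pbnd p P ->
  nu.-integrable (Y : set (borelRV R d2)) (EFin \o (pflat Z0 v p : borelRV R d2 -> R)).
Proof. by move=> Hp; apply: (int_uc nu cY (pf_uc Hp)) => a Ya; apply: pf_bnd Hp. Qed.

Let KI := fine (mu X) + fine (nu Y).

Lemma I_cmp p q P Q d : pbnd p P -> pbnd q Q ->
  (forall x, X x -> psharp Z0 u q x <= psharp Z0 u p x + d) ->
  (forall y, Y y -> pflat Z0 v p y - d <= pflat Z0 v q y) ->
  Ifun mu nu X Y Z0 u v q <= Ifun mu nu X Y Z0 u v p + d * KI.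
Proof.
move=> Hp Hq H1 H2; rewrite /Ifun /KI.
have i1 := int_ps Hp; have i2 := int_ps Hq; have i3 := int_pf Hp; have i4 := int_pf Hq.
have c1 := finite_measure_integrable_cst mu d mX.
have c2 := finite_measure_integrable_cst nu d mY.
have e1 : Rintegral mu (X : set (borelRV R d1)) (psharp Z0 u q : borelRV R d1 -> R) <=
    Rintegral mu (X : set (borelRV R d1)) (psharp Z0 u p : borelRV R d1 -> R) + d * fine (mu X).
  rewrite -(Rintegral_cst mu mX) -RintegralD //.
  apply: le_Rintegral; first exact: mX; first exact: i2; last by move=> x Xx; apply: H1.
  rewrite (_ : _ \o _ = (EFin \o (psharp Z0 u p : borelRV R d1 -> R)) \+ (EFin \o cst d))%E.
    exact: (integrableD mX i1 c1).
  by apply/funext => x /=; rewrite EFinD.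
have e2 : Rintegral nu (Y : set (borelRV R d2)) (pflat Z0 v p : borelRV R d2 -> R) - d * fine (nu Y) <=
    Rintegral nu (Y : set (borelRV R d2)) (pflat Z0 v q : borelRV R d2 -> R).
  rewrite -(Rintegral_cst nu mY) -RintegralB //.
  apply: le_Rintegral => //.
    rewrite (_ : _ \o _ = (fun x => (EFin \o (pflat Z0 v p : borelRV R d2 -> R)) x - (EFin \o cst d) x))%E.
      exact: (integrableB mY i3 c2).
    by apply/funext => x /=; rewrite EFinB.
lra.
Qed.

Lemma pbnd_conv p q P Q t : pbnd p P -> pbnd q Q -> 0 <= t <= 1 ->
  pbnd (fun z => t * p z + (1 - t) * q z) (P + Q).
Proof.
move=> Hp Hq /andP [t0 t1] z Zz.
have h1 := Hp z Zz; have h2 := Hq z Zz.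
have t1' : 0 <= 1 - t by lra.
apply: (le_trans (ler_normD _ _)); rewrite !normrM (ger0_norm t0) (ger0_norm t1').
have a1 : 0 <= `|p z| by []. have a2 : 0 <= `|q z| by [].
have h3 : 0 <= t * (P - `|p z|) by apply: mulr_ge0; lra.
have h4 : 0 <= (1 - t) * (Q - `|q z|) by apply: mulr_ge0; lra.
have h5 : 0 <= (1 - t) * P by apply: mulr_ge0; lra.
have h6 : 0 <= t * Q by apply: mulr_ge0; lra.
nra.
Qed.

Lemma I_conv p q P Q t : pbnd p P -> pbnd q Q -> 0 <= t <= 1 ->
  Ifun mu nu X Y Z0 u v (fun z => t * p z + (1 - t) * q z) <=
  t * Ifun mu nu X Y Z0 u v p + (1 - t) * Ifun mu nu X Y Z0 u v q.
Proof.
move=> Hp Hq t01; have Hc := pbnd_conv Hp Hq t01.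
rewrite /Ifun.
have i1 := int_ps Hp; have i2 := int_ps Hq; have i3 := int_pf Hp; have i4 := int_pf Hq.
have i5 := int_ps Hc; have i6 := int_pf Hc.
have e1 : Rintegral mu (X : set (borelRV R d1)) (psharp Z0 u (fun z => t * p z + (1 - t) * q z) : borelRV R d1 -> R) <=
    t * Rintegral mu (X : set (borelRV R d1)) (psharp Z0 u p : borelRV R d1 -> R) +
    (1 - t) * Rintegral mu (X : set (borelRV R d1)) (psharp Z0 u q : borelRV R d1 -> R).
  have j1 := intRZ mX t i1; have j2 := intRZ mX (1 - t) i2.
  rewrite -!RintegralZl // -RintegralD //.
  apply: le_Rintegral => //; first exact: intRD.
  by move=> x Xx; exact: (ps_conv Xx Hp Hq t01).
have e2 : t * Rintegral nu (Y : set (borelRV R d2)) (pflat Z0 v p : borelRV R d2 -> R) +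
    (1 - t) * Rintegral nu (Y : set (borelRV R d2)) (pflat Z0 v q : borelRV R d2 -> R) <=
    Rintegral nu (Y : set (borelRV R d2)) (pflat Z0 v (fun z => t * p z + (1 - t) * q z) : borelRV R d2 -> R).
  have j1 := intRZ mY t i3; have j2 := intRZ mY (1 - t) i4.
  rewrite -!RintegralZl // -RintegralD //.
  apply: le_Rintegral => //; first exact: intRD.
  by move=> x Xx; exact: (pf_conv Xx Hp Hq t01).
lra.
Qed.

Definition bz (z : V) : R := bfun X u (ZR z).
Definition az (z : V) : R := afun Y v (ZR z).
Definition mkp (g : V -> R) : Zpt V -> R :=
  fun z => match z with ZR z0 => g z0 | _ => 0 end.
Definition cl (g : V -> R) : V -> R := fun z => Num.min (Num.max (g z) (az z)) (bz z).

Lemma bz_ge x z : X x -> Z0 z -> u x z <= bz z.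
Proof.
move=> Xx Zz; apply: (sup_img_ge (g := fun x => uext u x (ZR z)) (c := Mu)) => // j Xj.
exact: (le_trans (ler_norm _) (HMu Xj Zz)).
Qed.

Lemma bz_le z c : (forall x, X x -> u x z <= c) -> bz z <= c.
Proof. by move=> H; apply: (sup_img_le (g := fun x => uext u x (ZR z))). Qed.

Lemma bz_bnd z : Z0 z -> `|bz z| <= Mu.
Proof.
move=> Zz; have [x0 Xx0] := nX; rewrite ler_norml; apply/andP; split.
  apply: (le_trans _ (bz_ge Xx0 Zz)); have := HMu Xx0 Zz; rewrite ler_norml => /andP[] //.
by apply: bz_le => x Xx; apply: (le_trans (ler_norm _) (HMu Xx Zz)).
Qed.

Lemma az_le y z : Y y -> Z0 z -> az z <= v y z.
Proof.
move=> Yy Zz; apply: (inf_img_le (g := fun y => vext v y (ZR z)) (c := - Mv)) => // j Yj.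
rewrite lerNl; apply: (le_trans _ (HMv Yj Zz)); rewrite -normrN; exact: ler_norm.
Qed.

Lemma az_ge z c : (forall y, Y y -> c <= v y z) -> c <= az z.
Proof. by move=> H; apply: (inf_img_ge (g := fun y => vext v y (ZR z))). Qed.

Lemma az_bnd z : Z0 z -> `|az z| <= Mv.
Proof.
move=> Zz; have [y0 Yy0] := nY; rewrite ler_norml; apply/andP; split.
  apply: az_ge => y Yy; have := HMv Yy Zz; rewrite ler_norml => /andP[] //.
apply: (le_trans (az_le Yy0 Zz)); exact: (le_trans (ler_norm _) (HMv Yy0 Zz)).
Qed.

Lemma bz_uc e : 0 < e -> exists2 d, 0 < d & forall z z', Z0 z -> Z0 z' -> ball z d z' ->
  `|bz z - bz z'| < e.
Proof.
move=> e0; have [d d0 Hd] := uc_u (divr_gt0 e0 (ltr0Sn _ 1)).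
exists d => // z z' Zz Zz' zz'.
have key : forall a b, Z0 a -> Z0 b -> ball a d b \/ ball b d a -> bz a <= bz b + e / 2.
  move=> a b Za Zb ab; apply: bz_le => x Xx.
  have h1 := bz_ge Xx Zb.
  have h2 : `|u x a - u x b| < e / 2.
    case: ab => ab; first by apply: Hd => //; apply: ballxx.
    by rewrite distrC; apply: Hd => //; apply: ballxx.
  move: h2 => /ltr_normlP [h2 h3]; lra.
have k1 := key _ _ Zz Zz' (or_introl zz'); have k2 := key _ _ Zz' Zz (or_intror zz').
rewrite ltr_norml; apply/andP; split; lra.
Qed.

Lemma az_uc e : 0 < e -> exists2 d, 0 < d & forall z z', Z0 z -> Z0 z' -> ball z d z' ->
  `|az z - az z'| < e.
Proof.
move=> e0; have [d d0 Hd] := uc_v (divr_gt0 e0 (ltr0Sn _ 1)).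
exists d => // z z' Zz Zz' zz'.
have key : forall a b, Z0 a -> Z0 b -> ball a d b \/ ball b d a -> az b - e / 2 <= az a.
  move=> a b Za Zb ab; apply: az_ge => y Yy.
  have h1 := az_le Yy Zb.
  have h2 : `|v y a - v y b| < e / 2.
    case: ab => ab; first by apply: Hd => //; apply: ballxx.
    by rewrite distrC; apply: Hd => //; apply: ballxx.
  move: h2 => /ltr_normlP [h2 h3]; lra.
have k1 := key _ _ Zz Zz' (or_introl zz'); have k2 := key _ _ Zz' Zz (or_intror zz').
rewrite ltr_norml; apply/andP; split; lra.
Qed.

Lemma Z1_ZR z : Z1set X Y Z0 u v z -> exists z0, [/\ z = ZR z0, Z0 z0 & az z0 <= bz z0].
Proof.
case: z => [z0||] [Zz H].
- by exists z0.
- exfalso; move: H; apply/negP; rewrite -ltNge.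
  have h1 : bfun X u Zd <= 0 by apply: (sup_img_le (g := fun x => uext u x Zd)).
  have h2 : 1 <= afun Y v Zd by apply: (inf_img_ge (g := fun y => vext v y Zd)).
  lra.
- exfalso; move: H; apply/negP; rewrite -ltNge.
  have h1 : bfun X u Zs <= -1 by apply: (sup_img_le (g := fun x => uext u x Zs)).
  have h2 : 0 <= afun Y v Zs by apply: (inf_img_ge (g := fun y => vext v y Zs)).
  lra.
Qed.

Lemma cl_le_b g z : cl g z <= bz z.
Proof. by have [] := min_facts (Num.max (g z) (az z)) (bz z). Qed.

Lemma cl_ge_a g z : az z <= bz z -> az z <= cl g z.
Proof.
move=> ab; have [h1 h2 h3] := max_facts (g z) (az z).
have [k1 k2 k3] := min_facts (Num.max (g z) (az z)) (bz z).
rewrite /cl; case: k3 => ->; lra.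
Qed.

Lemma cl_ge g z : cl g z = bz z \/ g z <= cl g z.
Proof.
have [h1 h2 h3] := max_facts (g z) (az z).
have [k1 k2 k3] := min_facts (Num.max (g z) (az z)) (bz z).
rewrite /cl; case: k3 => ->; [right | left] => //.
Qed.

Lemma cl_le g z : cl g z <= g z \/ cl g z <= az z.
Proof.
have [h1 h2 h3] := max_facts (g z) (az z).
have [k1 k2 k3] := min_facts (Num.max (g z) (az z)) (bz z).
rewrite /cl; case: h3 => e; rewrite e in k1 *; [left | right] => //.
Qed.

Let PB := `|Mu| + `|Mv|.

Lemma cl_bnd g z : Z0 z -> `|cl g z| <= PB.
Proof.
move=> Zz; have [h1 h2 h3] := max_facts (g z) (az z).
have [k1 k2 k3] := min_facts (Num.max (g z) (az z)) (bz z).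
have := bz_bnd Zz; have := az_bnd Zz; rewrite !ler_norml => /andP [a1 a2] /andP [b1 b2].
have := ler_norm Mu; have := ler_norm Mv; have := ler_norm (- Mu); have := ler_norm (- Mv).
rewrite !normrN /PB /cl => n1 n2 n3 n4.
apply/andP; split; case: k3 => e; rewrite e; lra.
Qed.

Lemma pbnd_mkp_cl g : pbnd (mkp (cl g)) PB.
Proof.
have P0 : 0 <= PB by rewrite /PB addr_ge0.
by move=> [z0||] /= Zz; rewrite ?normr0 //; apply: cl_bnd.
Qed.

Lemma IMP1 p P : pbnd p P -> p Zd = 0 -> p Zs = 0 ->
  Ifun mu nu X Y Z0 u v (mkp (cl (fun z => p (ZR z)))) <= Ifun mu nu X Y Z0 u v p.
Proof.
move=> Hp pd ps.
have := @I_cmp p (mkp (cl (fun z => p (ZR z)))) P PB 0 Hp (pbnd_mkp_cl _).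
rewrite mul0r addr0; apply.
  move=> x Xx; rewrite addr0; apply: ps_le => -[z0||] Zz /=.
  - have ps0 := ps_ub Xx Hp ZZd; rewrite /= pd subr0 in ps0.
    case: (cl_ge (fun z => p (ZR z)) z0) => [->|h].
      by have := bz_ge Xx Zz; lra.
    have := ps_ub Xx Hp Zz; rewrite /=; lra.
  - by have := ps_ub Xx Hp ZZd; rewrite /= pd.
  - by have := ps_ub Xx Hp ZZs; rewrite /= ps.
move=> y Yy; rewrite subr0; apply: pf_ge => -[z0||] Zz /=.
- have pf0 := pf_lb Yy Hp ZZs; rewrite /= ps subr0 in pf0.
  case: (cl_le (fun z => p (ZR z)) z0) => h.
    by have := pf_lb Yy Hp Zz; rewrite /=; lra.
  by have := az_le Yy Zz; lra.
- by have := pf_lb Yy Hp ZZd; rewrite /= pd.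
- by have := pf_lb Yy Hp ZZs; rewrite /= ps.
Qed.

Definition qf (phi : 'rV[R]_d1 -> R) : V -> R := fun z => sup [set u x z - phi x | x in X].

Lemma qf_ge phi C x z : (forall x, X x -> `|phi x| <= C) -> X x -> Z0 z ->
  u x z - phi x <= qf phi z.
Proof.
move=> Hphi Xx Zz; apply: (sup_img_ge (g := fun x => u x z - phi x) (c := Mu + C)) => // j Xj.
apply: (le_trans (ler_norm _)); apply: (le_trans (ler_normB _ _)).
by rewrite lerD ?HMu ?Hphi.
Qed.

Lemma qf_le phi z c : (forall x, X x -> u x z - phi x <= c) -> qf phi z <= c.
Proof. by move=> H; apply: (sup_img_le (g := fun x => u x z - phi x)). Qed.

Lemma qf_bnd phi C z : (forall x, X x -> `|phi x| <= C) -> Z0 z -> `|qf phi z| <= Mu + C.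
Proof.
move=> Hphi Zz; have [x0 Xx0] := nX; rewrite ler_norml; apply/andP; split.
  apply: (le_trans _ (qf_ge Hphi Xx0 Zz)).
  have := HMu Xx0 Zz; have := Hphi x0 Xx0; rewrite !ler_norml => /andP [a1 a2] /andP [b1 b2].
  lra.
apply: qf_le => x Xx; have := HMu Xx Zz; have := Hphi x Xx.
rewrite !ler_norml => /andP [a1 a2] /andP [b1 b2]; lra.
Qed.

Lemma IMP2 p P : pbnd p P -> p Zd = 0 -> p Zs = 0 ->
  exists Q, pbnd (mkp (qf (psharp Z0 u p))) Q /\
  Ifun mu nu X Y Z0 u v (mkp (qf (psharp Z0 u p))) <= Ifun mu nu X Y Z0 u v p.
Proof.
move=> Hp pd ps.
have Hphi : forall x, X x -> `|psharp Z0 u p x| <= Bu + P by move=> x Xx; apply: ps_bnd Hp.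
have P0 := pbnd_ge0 Hp.
have HQ : pbnd (mkp (qf (psharp Z0 u p))) (`|Mu| + (Bu + P)).
  have Bu0 : 0 < Bu by rewrite /Bu ltr_pwDr.
  move=> [z0||] /= Zz; last 2 first.
  - by rewrite normr0; apply: addr_ge0 => //; lra.
  - by rewrite normr0; apply: addr_ge0 => //; lra.
  apply: (le_trans (qf_bnd Hphi Zz)); rewrite lerD2r; exact: ler_norm.
exists (`|Mu| + (Bu + P)); split => //.
have := @I_cmp p (mkp (qf (psharp Z0 u p))) P _ 0 Hp HQ.
rewrite mul0r addr0; apply.
  move=> x Xx; rewrite addr0; apply: ps_le => -[z0||] Zz /=.
  - by have := qf_ge Hphi Xx Zz; lra.
  - by have := ps_ub Xx Hp ZZd; rewrite /= pd.
  - by have := ps_ub Xx Hp ZZs; rewrite /= ps.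
move=> y Yy; have := @pf_cmp p (mkp (qf (psharp Z0 u p))) P 0 y Yy Hp; apply.
move=> [z0||] Zz /=; rewrite addr0.
- apply: qf_le => x Xx; have := ps_ub Xx Hp Zz; rewrite /=; lra.
- by rewrite pd.
- by rewrite ps.
Qed.

Let Cphi := Bu + PB.

Lemma reduce p : price_system Z0 p -> exists phi,
  (forall x, X x -> `|phi x| <= Cphi) /\
  Ifun mu nu X Y Z0 u v (mkp (cl (qf phi))) <= Ifun mu nu X Y Z0 u v p.
Proof.
move=> /[dup] pp [_ [pd ps]]; have [P HP] := price_pbnd pp.
have i1 := IMP1 HP pd ps.
set p1 := mkp (cl (fun z => p (ZR z))) in i1.
have H1 : pbnd p1 PB by exact: pbnd_mkp_cl.
have [Q [HQ i2]] := IMP2 H1 erefl erefl.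
have i3 := IMP1 HQ erefl erefl.
exists (psharp Z0 u p1); split.
  by move=> x Xx; apply: ps_bnd H1.
apply: (le_trans i3); apply: (le_trans i2); exact: i1.
Qed.

Definition W := [set f : V -> R | exists2 phi,
  (forall x, X x -> `|phi x| <= Cphi) & f = cl (qf phi)].

Lemma qf_uc e : 0 < e -> exists2 d, 0 < d & forall phi, (forall x, X x -> `|phi x| <= Cphi) ->
  forall z z', Z0 z -> Z0 z' -> ball z d z' -> `|qf phi z - qf phi z'| < e.
Proof.
move=> e0; have [d d0 Hd] := uc_u (divr_gt0 e0 (ltr0Sn _ 1)).
exists d => // phi Hphi z z' Zz Zz' zz'.
have key : forall a b, Z0 a -> Z0 b -> ball a d b \/ ball b d a ->
    qf phi a <= qf phi b + e / 2.
  move=> a b Za Zb ab; apply: qf_le => x Xx.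
  have h1 := qf_ge Hphi Xx Zb.
  have h2 : `|u x a - u x b| < e / 2.
    case: ab => ab; first by apply: Hd => //; apply: ballxx.
    by rewrite distrC; apply: Hd => //; apply: ballxx.
  move: h2 => /ltr_normlP [h2 h3]; lra.
have k1 := key _ _ Zz Zz' (or_introl zz'); have k2 := key _ _ Zz' Zz (or_intror zz').
rewrite ltr_norml; apply/andP; split; lra.
Qed.

Lemma W_uc e : 0 < e -> exists2 d, 0 < d & forall f, W f ->
  forall z z', Z0 z -> Z0 z' -> ball z d z' -> `|f z - f z'| < e.
Proof.
move=> e0; have eq3 : 0 < e / 3 by rewrite divr_gt0.
have [e1 e1p H1] := qf_uc eq3; have [e2 e2p H2] := az_uc eq3; have [e3 e3p H3] := bz_uc eq3.
have [m1 m2 m3] := min_facts e1 (Num.min e2 e3).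
have [n1 n2 n3] := min_facts e2 e3.
set dd := Num.min e1 (Num.min e2 e3) in m1 m2 m3.
exists dd.
  by case: m3 => ->; rewrite ?e1p //; case: n3 => ->.
move=> f [phi Hphi ->] z z' Zz Zz' zz'.
apply: (le_lt_trans (clamp_lip _ _ _ _ _ _)).
have a1 := H1 phi Hphi z z' Zz Zz' (le_ball m1 zz').
have a2 := H2 z z' Zz Zz' (le_ball (le_trans m2 n1) zz').
have a3 := H3 z z' Zz Zz' (le_ball (le_trans m2 n2) zz').
lra.
Qed.

Lemma W_bnd f z : W f -> Z0 z -> `|f z| <= PB.
Proof. by move=> [phi _ ->] Zz; apply: cl_bnd. Qed.

Lemma W_ab f z : W f -> az z <= bz z -> az z <= f z <= bz z.
Proof. by move=> [phi _ ->] ab; rewrite cl_le_b andbT cl_ge_a. Qed.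

Lemma W_pt f z : W f -> Num.min (az z) (bz z) <= f z <= bz z.
Proof.
move=> [phi _ ->]; rewrite cl_le_b andbT.
have [h1 h2 h3] := max_facts (qf phi z) (az z).
have [k1 k2 k3] := min_facts (Num.max (qf phi z) (az z)) (bz z).
have [l1 l2 l3] := min_facts (az z) (bz z).
rewrite /cl; case: k3 => ->; lra.
Qed.

Lemma I_ge0 p P : pbnd p P -> p Zd = 0 -> p Zs = 0 -> 0 <= Ifun mu nu X Y Z0 u v p.
Proof.
move=> Hp pd ps; rewrite /Ifun subr_ge0.
apply: (@le_trans _ _ 0).
  have c0 := finite_measure_integrable_cst nu 0 mY.
  apply: (le_trans (le_Rintegral mY (int_pf Hp) c0 _)).
    move=> y Yy /=; have := pf_lb Yy Hp ZZs; rewrite /= ps subr0 //.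
  by rewrite Rintegral_cst // mul0r.
apply: Rintegral_ge0 => x Xx.
by have := ps_ub Xx Hp ZZd; rewrite /= pd subr0.
Qed.

Lemma W_I_ge0 f : W f -> 0 <= Ifun mu nu X Y Z0 u v (mkp f).
Proof.
move=> Wf; apply: (@I_ge0 _ PB) => //.
by move=> [z0||] Zz //=; rewrite ?normr0 ?addr_ge0 //; apply: W_bnd.
Qed.

Let m := inf [set Ifun mu nu X Y Z0 u v (mkp f) | f in W].

Lemma Cphi_ge0 : 0 <= Cphi.
Proof. by rewrite /Cphi /Bu /PB !addr_ge0. Qed.

Lemma W_ne : W !=set0.
Proof.
exists (cl (qf (fun _ => 0))); exists (fun _ => 0) => // x _.
by rewrite normr0 Cphi_ge0.
Qed.

Lemma m_le f : W f -> m <= Ifun mu nu X Y Z0 u v (mkp f).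
Proof.
by move=> Wf; apply: (inf_img_le (g := fun f => Ifun mu nu X Y Z0 u v (mkp f)) (c := 0)) => // j Wj;
  apply: W_I_ge0.
Qed.

Lemma m_approx e : 0 < e -> exists f, W f /\ Ifun mu nu X Y Z0 u v (mkp f) < m + e.
Proof.
move=> e0; apply: contrapT => H.
have : m + e <= m.
  apply: (inf_img_ge (g := fun f => Ifun mu nu X Y Z0 u v (mkp f))); first exact: W_ne.
  move=> f Wf; rewrite leNgt; apply/negP => lt; apply: H; exists f; split => //.
lra.
Qed.

Lemma W_pc : precompact (W : set {family compact, subspace Z0 -> R}).
Proof.
apply: (@pointwise_precompact_equicontinuous _ _ (@Rhausdorff R)).
- move=> z; apply: (@precompact_subset _ _ `[Num.min (az z) (bz z), bz z]%classic).
    move=> _ [f Wf <-] /=; rewrite in_itv /=; exact: W_pt.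
  apply: compact_precompact; first exact: Rhausdorff.
  exact: segment_compact.
- move=> z E; rewrite -entourage_ballE => -[e /= e0 He].
  have [d d0 Hd] := W_uc e0.
  apply/nbhs_ballP; exists d => //= y.
  rewrite ball_subspace_ball /subspace_ball; case: ifP => /asboolP Zz.
    move=> [Zy zy] f Wf; apply: He; rewrite /ball /=.
    exact: Hd.
  move=> -> f Wf; apply: He; exact: ballxx.
Qed.

Lemma inv_mono (N n : nat) : (N <= n)%N -> (n.+1%:R : R)^-1 <= (N.+1%:R)^-1.
Proof.
move=> Nn; rewrite lef_pV2 ?posrE ?ltr0Sn // ler_nat ltnS //.
Qed.

Lemma exists_g : exists g : V -> R, forall e : R, 0 < e -> forall c : R, 0 < c ->
  exists f, [/\ W f, (forall z, Z0 z -> `|g z - f z| < e) &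
    Ifun mu nu X Y Z0 u v (mkp f) < m + c].
Proof.
have h n : exists f, W f /\ Ifun mu nu X Y Z0 u v (mkp f) < m + n.+1%:R^-1.
  by apply: m_approx; rewrite invr_gt0 ltr0Sn.
have [fs Hfs] := choice h.
have pc := W_pc; rewrite precompactE in pc.
have PF : ProperFilter (fs @ \oo) by exact: fmap_proper_filter.
have FW : (fs @ \oo) (closure (W : set {family compact, subspace Z0 -> R})).
  exists 0%N => // n _; apply: subset_closure; exact: (Hfs n).1.
have [g [_ clg]] := pc _ PF FW.
exists g => e e0 c c0.
have [N HN] := ltr_add_invr c0; rewrite add0r in HN.
pose A := [set f : {family compact, subspace Z0 -> R} | exists2 n, (N <= n)%N & f = fs n].
pose B := [set h : {family compact, subspace Z0 -> R} |
  forall z, Z0 z -> [set xy : R * R | ball xy.1 e xy.2] (g z, h z)].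
have FA : (fs @ \oo) A by exists N => // n Nn; exists n.
have NB : nbhs g B.
  apply: fam_nbhs.
    by rewrite -entourage_ballE; exists e.
  have := (compact_subspaceIP Z0 Z0).2; rewrite setIid; apply; exact: cZ.
have [f [[n Nn ->] Bf]] := clg A B FA NB.
exists (fs n); split.
- exact: (Hfs n).1.
- move=> z Zz; have := Bf z Zz; rewrite /ball /=; done.
- apply: (lt_le_trans (Hfs n).2); rewrite lerD2l; apply: (le_trans (inv_mono Nn)); exact: ltW.
Qed.

Lemma KI_ge0 : 0 <= KI.
Proof. by rewrite /KI addr_ge0 // fine_ge0 // measure_ge0. Qed.

Lemma main_exists : exists pbar, admissible X Y Z0 u v pbar /\
  forall p, admissible X Y Z0 u v p ->
    Ifun mu nu X Y Z0 u v pbar <= Ifun mu nu X Y Z0 u v p.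
Proof.
have [g Hg] := exists_g.
have approx (e : R) : 0 < e -> exists f, W f /\ forall z, Z0 z -> `|g z - f z| < e.
  by move=> e0; have [f [Wf Hf _]] := Hg e e0 1 ltr01; exists f.
have g_uc (e : R) : 0 < e -> exists2 d, 0 < d & forall a b, Z0 a -> Z0 b -> ball a d b ->
    `|g a - g b| < e.
  move=> e0; have e3 : 0 < e / 3 by rewrite divr_gt0.
  have [d d0 Hd] := W_uc e3; have [f [Wf Hf]] := approx _ e3.
  exists d => // a b Za Zb ab.
  have h1 := Hf a Za; have h2 := Hf b Zb; have h3 := Hd f Wf a b Za Zb ab.
  move: h1 h2 h3 => /ltr_normlP [h1 h1'] /ltr_normlP [h2 h2'] /ltr_normlP [h3 h3'].
  rewrite ltr_norml; apply/andP; split; lra.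
have g_bnd z : Z0 z -> `|g z| <= PB + 1.
  move=> Zz; have [f [Wf Hf]] := approx _ ltr01.
  have h1 := Hf z Zz; have h2 := W_bnd Wf Zz.
  move: h1 h2 => /ltr_normlP [h1 h1']; rewrite ler_norml => /andP [h2 h2'].
  rewrite ler_norml; apply/andP; split; lra.
have g_ab z : Z0 z -> az z <= bz z -> az z <= g z <= bz z.
  move=> Zz ab; apply/andP; split; apply/ler_addgt0Pr => e e0;
    have [f [Wf Hf]] := approx _ e0; have h1 := Hf z Zz;
    have /andP [h2 h3] := W_ab Wf ab; move: h1 => /ltr_normlP [h1 h1']; lra.
have Hg' : pbnd (mkp g) (PB + 1).
  by move=> [z0||] Zz //=; rewrite ?normr0 ?addr_ge0 //; apply: g_bnd.
have adm : admissible X Y Z0 u v (mkp g).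
  split; first split.
  - exact: uc_within g_uc.
  - by [].
  - by move=> z /Z1_ZR [z0 [-> Zz ab]]; exact: g_ab.
have Ile : Ifun mu nu X Y Z0 u v (mkp g) <= m.
  apply/ler_addgt0Pr => c c0.
  have KI0 := KI_ge0.
  have K1 : 0 < KI + 1 by lra.
  pose e := c / (2 * (KI + 1)).
  have e0 : 0 < e by rewrite /e divr_gt0 // mulr_gt0.
  have c2 : 0 < c / 2 by rewrite divr_gt0.
  have [f [Wf Hf If]] := Hg e e0 (c / 2) c2.
  have Hf' : pbnd (mkp f) PB.
    have P0 : 0 <= PB by rewrite /PB addr_ge0.
    by move=> [z0||] Zz //=; rewrite ?normr0 //; apply: W_bnd.
  have eK : e * KI <= c / 2.
    have ee : e * (KI + 1) = c / 2.
      by rewrite /e; field; exact: lt0r_neq0.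
    rewrite -ee; apply: ler_wpM2l; [exact: ltW | lra].
  have H1 : forall x, X x -> psharp Z0 u (mkp g) x <= psharp Z0 u (mkp f) x + e.
    move=> x Xx; apply: (ps_cmp Xx Hf') => -[z0||] Zz /=; try lra.
    by have := Hf z0 Zz; move=> /ltr_normlP [h1 h1']; lra.
  have H2 : forall y, Y y -> pflat Z0 v (mkp f) y - e <= pflat Z0 v (mkp g) y.
    move=> y Yy; apply: (pf_cmp Yy Hf') => -[z0||] Zz /=; try lra.
    by have := Hf z0 Zz; move=> /ltr_normlP [h1 h1']; lra.
  have := @I_cmp (mkp f) (mkp g) PB (PB + 1) e Hf' Hg' H1 H2.
  lra.
exists (mkp g); split => // p pa.
apply: (le_trans Ile).
have [phi [Hphi Hle]] := reduce pa.1.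
apply: le_trans Hle; apply: m_le; exists phi => //.
Qed.
End Main.

Unset Implicit Arguments.

Theorem mainTheorem12 (R : realType) (d1 d2 d3 : nat)
  (X : set 'rV[R]_d1) (Y : set 'rV[R]_d2) (Z0 : set 'rV[R]_d3)
  (mu : {finite_measure set (borelRV R d1) -> \bar R})
  (nu : {finite_measure set (borelRV R d2) -> \bar R})
  (u : 'rV[R]_d1 -> 'rV[R]_d3 -> R) (v : 'rV[R]_d2 -> 'rV[R]_d3 -> R) :
  compact X -> compact Y -> compact Z0 ->
  X !=set0 -> Y !=set0 ->
  regular_first X Z0 u -> regular_first Y Z0 v ->
  Z1set X Y Z0 u v !=set0 ->
  (* I is convex on the (convex) set of admissible price systems *)
  (forall (p q : Zpt 'rV[R]_d3 -> R) (t : R),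
      admissible X Y Z0 u v p -> admissible X Y Z0 u v q -> 0 <= t <= 1 ->
      admissible X Y Z0 u v (fun z => t * p z + (1 - t) * q z) /\
      Ifun mu nu X Y Z0 u v (fun z => t * p z + (1 - t) * q z)
        <= t * Ifun mu nu X Y Z0 u v p + (1 - t) * Ifun mu nu X Y Z0 u v q) /\
  (* the infimum of I over admissible price systems is attained *)
  (exists pbar : Zpt 'rV[R]_d3 -> R,
      admissible X Y Z0 u v pbar /\
      forall p, admissible X Y Z0 u v p ->
        Ifun mu nu X Y Z0 u v pbar <= Ifun mu nu X Y Z0 u v p).
Proof.
move=> cX cY cZ nX nY [U [oU sU cU _ _]] [U' [oU' sU' cV _ _]] _.
have cu : forall q, (X `*` Z0) q -> {for q, continuous (fun r => u r.1 r.2)}.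
  by move=> q Hq; apply: cU; apply: sU.
have cv : forall q, (Y `*` Z0) q -> {for q, continuous (fun r => v r.1 r.2)}.
  by move=> q Hq; apply: cV; apply: sU'.
have [Mu HMu] := bnd_u cX cZ cu.
have [Mv HMv] := bnd_v cY cZ cv.
split; last exact: (main_exists cX cY cZ nX nY cu cv HMu HMv mu nu).
move=> p q t pa qa t01; split.
- case: pa => [[cp [pd ps]] pab]; case: qa => [[cq [qd qs]] qab].
  split; first (split; last split).
  + by have := within_comb (a := t) (b := 1 - t) cp cq.
  + by rewrite /= pd qd !mulr0 addr0.
  + by rewrite /= ps qs !mulr0 addr0.
  move=> z Z1z; have /andP [a1 a2] := pab z Z1z; have /andP [b1 b2] := qab z Z1z.
  move: t01 => /andP [t0 t1].
  have h1 : 0 <= t * (p z - afun Y v z) by apply: mulr_ge0; lra.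
  have h2 : 0 <= (1 - t) * (q z - afun Y v z) by apply: mulr_ge0; lra.
  have h3 : 0 <= t * (bfun X u z - p z) by apply: mulr_ge0; lra.
  have h4 : 0 <= (1 - t) * (bfun X u z - q z) by apply: mulr_ge0; lra.
  apply/andP; split; nra.
- have [P HP] := price_pbnd cZ pa.1; have [Q HQ] := price_pbnd cZ qa.1.
  exact: (I_conv cX cY cZ cu cv HMu HMv mu nu HP HQ t01).
Qed.
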